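(* Let $(\mathbf{C}, I^{\Delta})$ be a finite-type based chain complex of real inner product spaces with Hodge basis $I^\Delta$, and let $M^\Delta$ be the Hodge matching on $(\mathbf{C},I^{\Delta})$. Then $M^\Delta$ is a Morse matching and satisfies \begin{enumerate} \item $(M^\Delta)^0_n = \ker \Delta_n$ (i.e. the critical cells in degree $n$ span $\ker\Delta_n$), where $\Delta : \mathbf{C} \to \mathbf{C}$ is the combinatorial Laplacian of $\mathbf{C}$, and \item $\partial^{M^\Delta} = 0$, where $\partial^{M^\Delta}$ is the boundary operator of the Morse chain complex $\mathbf{C}^{M^\Delta}$. \end{enumerate}
   Context: $(\mathbf{C},\partial)$ is a degree-wise finite-dimensional chain complex of real vector spaces with an inner product on each $\mathbf{C}_n$; $\partial_n^\dagger:\mathbf{C}_{n-1}\to\mathbf{C}_n$ denotes the adjoint of $\partial_n$. The combinatorial Laplacian is $\Delta_n = \partial_n^\dagger\partial_n + \partial_{n+1}\partial_{n+1}^\dagger$, with $\Delta_n^+=\partial_{n+1}\partial_{n+1}^\dagger$ and $\Delta_n^-=\partial_n^\dagger\partial_n$; one has the orthogonal Hodge decomposition $\mathbf{C}_n = \operatorname{im}\partial_{n+1}\oplus\ker\Delta_n\oplus\operatorname{im}\partial_n^\dagger$. For a linear map $f:V\to W$ of real finite-dimensional inner product spaces, singular value decomposition gives orthonormal bases $\mathcal{R}(f)$ of $V$ and $\mathcal{L}(f)$ of $W$ consisting of eigenvectors of $f^\dagger f$ and $ff^\dagger$, such that for each nonzero eigenvalue $\lambda$ there are unique $v\in\mathcal{R}(f)$,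 $w\in\mathcal{L}(f)$ with $f(v)=\sqrt{\lambda}\,w$; $\mathcal{R}_+(f),\mathcal{L}_+(f)$ denote the elements with nonzero eigenvalue. A Hodge basis is $I^\Delta=\{I^\Delta_n\}$ with $I_n^{\Delta}= \mathcal{L}_+(\partial_{n+1}) \cup \mathcal{R}_+(\partial_n) \cup \mathcal{B}(\ker\Delta_n)$ for some basis $\mathcal{B}(\ker\Delta_n)$ of $\ker\Delta_n$ (each basis vector spanning a one-dimensional summand). The Hodge matching is $M^\Delta := \bigcup_i \{ v \in \mathcal{R}_+(\partial_i) \to w \in \mathcal{L}_+(\partial_i) \mid \partial_i v = \sigma w, \sigma \neq 0 \}$. For a based complex $(\mathbf{C},I)$ with $\mathbf{C}_n=\bigoplus_{\alpha\in I_n}C_\alpha$ and components $\partial_{\beta,\alpha}:C_\alpha\to C_\beta$, the graph $\mathcal{G}(\mathbf{C})$ has vertices $I$ and edges $\alpha\to\beta$ whenever $\partial_{\beta,\alpha}\neq0$; a Morse matching $M$ is a set of edges such that each vertex is in at most one edge of $M$, each $\partial_{\beta,\alpha}$ for $\alpha\to\beta$ in $M$ is an isomorphism, and the relation ''there is a directed path from $\alpha$ to $\beta$ in $\mathcal{G}(\mathbf{C})$ with the edges of $M$ reversed'' is a partial order on each $I_n$. $M^0$ denotes the unmatched (critical) cells; the Morse complex $\mathbf{C}^M_n=\bigoplus_{\alpha\in I_n\cap M^0}C_\alpha$ has boundary $\partial^{M}(x)=\sum_{\beta\in M^0\cap I_{n-1}}\Gamma_{\beta,\alpha}(x)$, where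 $\Gamma_{\beta,\alpha}$ is the sum over directed paths from $\alpha$ to $\beta$ in the reversed graph of the composites of components, with matched edges contributing $-\partial_{\beta,\alpha}^{-1}$. *)

(* Defs.v *)
From HB Require Import structures.
From mathcomp Require Import all_boot all_order all_algebra.
From mathcomp Require Import boolp reals.
From Stdlib Require Import Relations.

Unset Printing Implicit Defensive.
Import Order.TTheory GRing.Theory Num.Theory.
Local Open Scope ring_scope.

Section Defs.
Variable R : realType.

(* Vectors are row vectors; a linear map f : R^p -> R^q is x |-> x *m f.   *)
(* An inner product on R^p is <x,y> = (x *m G *m y^T) 0 0 with G symmetric *)
(* positive definite.                                                      *)
Definition inner_prod_mx p (G : 'M[R]_p) : Prop :=
  G^T = G /\ forall x : 'rV[R]_p, x != 0 -> 0 < (x *m G *m x^T) 0 0.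

(* adjoint f^dagger : R^q -> R^p of f : R^p -> R^q, for Grams Gs, Gt:
   <x f, y>_t = <x, y f^dagger>_s *)
Definition adjoint {p q} (Gs : 'M[R]_p) (Gt : 'M[R]_q) (f : 'M[R]_(p, q))
  : 'M[R]_(q, p) := Gt *m f^T *m invmx Gs.

(* SVD bases: rows of Rb form an orthonormal basis of the source consisting of
   eigenvectors of f^dagger f, rows of Lb an orthonormal basis of the target
   of eigenvectors of f f^dagger; elements with nonzero eigenvalue are paired:
   f v = sqrt(lambda) w. *)
Definition svd_bases {p q} (Gs : 'M[R]_p) (Gt : 'M[R]_q) (f : 'M[R]_(p, q))
    (Rb : 'M[R]_p) (Lb : 'M[R]_q) : Prop :=
  let fa := adjoint Gs Gt f in
  [/\ Rb *m Gs *m Rb^T = 1%:M /\ Lb *m Gt *m Lb^T = 1%:M,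
      forall i, exists l : R, row i Rb *m (f *m fa) = l *: row i Rb,
      forall j, exists l : R, row j Lb *m (fa *m f) = l *: row j Lb,
      (forall i, row i Rb *m (f *m fa) != 0 ->
         exists (l : R) (j : 'I_q),
           [/\ row i Rb *m (f *m fa) = l *: row i Rb,
               row j Lb *m (fa *m f) != 0 &
               row i Rb *m f = Num.sqrt l *: row j Lb]) &
      (forall j, row j Lb *m (fa *m f) != 0 ->
         exists (l : R) (i : 'I_p),
           [/\ row i Rb *m (f *m fa) = l *: row i Rb,
               row i Rb *m (f *m fa) != 0 &
               row i Rb *m f = Num.sqrt l *: row j Lb])].

Definition mxn {m n} (A : 'M[R]_(m, n)) (i j : nat) : R :=
  match (insub i : option 'I_m), (insub j : option 'I_n) with
  | Some a, Some b => A a b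
  | _, _ => 0
  end.

Definition is_poset {T : Type} (r : T -> T -> Prop) : Prop :=
  [/\ forall a, r a a,
      forall a b c, r a b -> r b c -> r a c &
      forall a b, r a b -> r b a -> a = b].

Section Morse.
Variable d : nat -> nat.
(* c n a b = the component  partial_{b,a}  (a scalar, the cells being
   one-dimensional) of the boundary C_{n+1} -> C_n from cell a to cell b *)
Variable c : forall n, 'M[R]_(d n.+1, d n).
(* M n a b : the edge a -> b (a in degree n+1, b in degree n) is matched *)
Variable M : forall n, 'I_(d n.+1) -> 'I_(d n) -> bool.

(* vertices of the graph are pairs (degree, index) *)
Definition cn (k i j : nat) : R := mxn (c k) i j.
Definition Mn (k i j : nat) : bool :=
  match (insub i : option 'I_(d k.+1)), (insub j : option 'I_(d k)) with
  | Some a, Some b => M k a b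
  | _, _ => false
  end.

(* directed edges of G(C) with the edges of M reversed *)
Definition stepM (u v : nat * nat) : bool :=
  ((u.1 == v.1.+1) && (cn v.1 u.2 v.2 != 0) && ~~ Mn v.1 u.2 v.2)
  || ((v.1 == u.1.+1) && Mn u.1 v.2 u.2).

Definition reachM : nat * nat -> nat * nat -> Prop :=
  clos_refl_trans (nat * nat) (fun u v => stepM u v).

Definition morse_matching : Prop :=
  [/\ (forall n a b, M n a b -> c n a b != 0),
      (forall n a b b', M n a b -> M n a b' -> b = b'),
      (forall n a a' b, M n a b -> M n a' b -> a = a'),
      (forall n (a : 'I_(d n.+1)) b g, M n a b -> M n.+1 g a -> False) &
      (forall n, is_poset (fun a b : 'I_(d n) => reachM (n, val a) (n, val b)))].

Definition critical (k i : nat) : Prop :=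
  [/\ (i < d k)%N, forall j, ~~ Mn k j i & forall j, (0 < k)%N -> ~~ Mn k.-1 i j].

Definition stepw (u v : nat * nat) : R :=
  if (u.1 == v.1.+1) && ~~ Mn v.1 u.2 v.2 then cn v.1 u.2 v.2
  else if (v.1 == u.1.+1) && Mn u.1 v.2 u.2 then - (cn u.1 v.2 u.2)^-1
  else 0.

Fixpoint pathw (u : nat * nat) (s : seq (nat * nat)) : R :=
  match s with
  | [::] => 1
  | v :: s' => stepw u v * pathw v s'
  end.

(* every path from a cell of degree n+1 to one of degree n stays in
   degrees <= n+1; vertices in those degrees are encoded in W n *)
Definition maxd n := \max_(k < n.+2) d k.
Definition nverts n := \sum_(k < n.+2) d k.
Definition toV {n} (x : 'I_n.+2 * 'I_(maxd n)) : nat * nat :=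
  (val x.1, val x.2).
Definition pth {n} (b : nat) {m} (t : m.-tuple ('I_n.+2 * 'I_(maxd n))) :=
  rcons [seq toV x | x <- t] (n, b).

(* Gamma_{b,a} for a in degree n+1, b in degree n: sum over all directed
   paths from a to b (with edges of M reversed) of the composite weights *)
Definition morse_coef n (a b : nat) : R :=
  \sum_(m < (nverts n).+1)
    \sum_(t : m.-tuple ('I_n.+2 * 'I_(maxd n))
          | path stepM (n.+1, a) (pth b t) && uniq ((n.+1, a) :: pth b t))
      pathw (n.+1, a) (pth b t).

End Morse.

Section Hodge.
Variable d : nat -> nat.
(* D n = boundary partial_{n+1} : C_{n+1} -> C_n ; partial_0 = 0 *)
Variable D : forall n, 'M[R]_(d n.+1, d n).
Variable G : forall n, 'M[R]_(d n).

Definition is_complex : Prop := forall n, D n.+1 *m D n = 0.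

(* adj n = partial_{n+1}^dagger : C_n -> C_{n+1} *)
Definition adj n : 'M[R]_(d n, d n.+1) := adjoint (G n.+1) (G n) (D n).

Definition lap n : 'M[R]_(d n) :=
  adj n *m D n +
  (match n return 'M[R]_(d n) with 0 => 0 | m.+1 => D m *m adj m end).

(* SVD data for partial_{n+1}: Rb n basis of C_{n+1}, Lb n basis of C_n *)
Variable Rb : forall n, 'M[R]_(d n.+1).
Variable Lb : forall n, 'M[R]_(d n).

Definition Rplus {n} (i : 'I_(d n.+1)) : Prop :=
  row i (Rb n) *m (D n *m adj n) != 0.
Definition Lplus {n} (j : 'I_(d n)) : Prop :=
  row j (Lb n) *m (adj n *m D n) != 0.

Definition inL {n} (v : 'rV[R]_(d n)) : Prop :=
  exists j, Lplus j /\ v = row j (Lb n).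
Definition inR {n} : 'rV[R]_(d n) -> Prop :=
  match n return 'rV[R]_(d n) -> Prop with
  | 0 => fun _ => False
  | m.+1 => fun v => exists i, Rplus i /\ v = row i (Rb m)
  end.

(* B n : the Hodge basis of C_n (its rows are the basis vectors, the cells of
   degree n are indexed by 'I_(d n)):
   I_n = L_+(partial_{n+1}) u R_+(partial_n) u (a basis of ker Delta_n) *)
Variable B : forall n, 'M[R]_(d n).

Definition hodge_basis : Prop :=
  [/\ forall n, B n \in unitmx,
      forall n (a : 'I_(d n)),
        inL (row a (B n)) \/ inR (row a (B n)) \/ row a (B n) *m lap n = 0,
      forall n j, Lplus j -> exists a : 'I_(d n), row a (B n) = row j (Lb n),
      forall m i, Rplus i -> exists a : 'I_(d m.+1), row a (B m.+1) = row i (Rb m) &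
      forall n (x : 'rV[R]_(d n)), x *m lap n = 0 ->
        exists cf : 'I_(d n) -> R,
          x = \sum_(a | row a (B n) *m lap n == 0) cf a *: row a (B n)].

(* components of the boundary in the basis B:
   row a (B n.+1) *m D n = \sum_b (bcoef n) a b *: row b (B n) *)
Definition bcoef n : 'M[R]_(d n.+1, d n) := B n.+1 *m D n *m invmx (B n).

Definition hodge_matching n (a : 'I_(d n.+1)) (b : 'I_(d n)) : bool :=
  `[< exists (i : 'I_(d n.+1)) (j : 'I_(d n)),
        [/\ Rplus i, Lplus j, row a (B n.+1) = row i (Rb n),
            row b (B n) = row j (Lb n) &
            exists s : R, s != 0 /\ row i (Rb n) *m D n = s *: row j (Lb n)] >].

End Hodge.
End Defs.


Arguments inner_prod_mx {R p}.
Arguments svd_bases {R p q}.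
Arguments is_complex {R d}.
Arguments lap {R d}.
Arguments hodge_basis {R d}.
Arguments bcoef {R d}.
Arguments hodge_matching {R d}.
Arguments morse_matching {R d}.
Arguments critical {d}.
Arguments morse_coef {R d}.

(* Main.v *)
Require Import Defs.
From HB Require Import structures.
From mathcomp Require Import all_boot all_order all_algebra.
From mathcomp Require Import boolp reals.
From Stdlib Require Import Relations.
Import Order.TTheory GRing.Theory Num.Theory.
Local Open Scope ring_scope.
Set Implicit Arguments. Unset Strict Implicit.

Section Lin.
Variable R : realType.

Lemma mx11T (A : 'M[R]_1) : A^T = A.
Proof. by apply/matrixP => i j; rewrite !ord1 mxE. Qed.

Lemma ip_sym p (A : 'M[R]_p) (u v : 'rV[R]_p) : A^T = A ->
  u *m A *m v^T = v *m A *m u^T.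
Proof. by move=> HA; rewrite -[LHS]mx11T !trmx_mul trmxK HA mulmxA. Qed.

Lemma pd_unit p (A : 'M[R]_p) : inner_prod_mx A -> A \in unitmx.
Proof.
case=> _ HA; rewrite -row_free_unit -kermx_eq0; apply/rowV0P => v /sub_kermxP Hv.
apply/eqP; apply: contraT => /HA; by rewrite Hv mul0mx mxE ltxx.
Qed.

Lemma pd_ge0 p (A : 'M[R]_p) (x : 'rV[R]_p) : inner_prod_mx A -> 0 <= (x *m A *m x^T) 0 0.
Proof.
case=> _ HA; have [->|/HA/ltW//] := eqVneq x 0.
by rewrite mul0mx mul0mx mxE.
Qed.

Lemma pd_eq0 p (A : 'M[R]_p) (x : 'rV[R]_p) : inner_prod_mx A -> (x *m A *m x^T) 0 0 = 0 -> x = 0.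
Proof.
case=> _ HA H; apply/eqP; apply: contraT => /HA; by rewrite H ltxx.
Qed.

Lemma ip_adj p q (Gs : 'M[R]_p) (Gt : 'M[R]_q) (f : 'M[R]_(p,q)) (y : 'rV[R]_p) (z : 'rV[R]_q) :
  inner_prod_mx Gs -> inner_prod_mx Gt ->
  y *m f *m Gt *m z^T = y *m Gs *m (z *m adjoint R Gs Gt f)^T.
Proof.
move=> HGs HGt; have Hu := pd_unit HGs; case: HGs => Ss _; case: HGt => St _.
rewrite /adjoint !trmx_mul trmx_inv Ss trmxK St !mulmxA -[y *m Gs *m _]mulmxA mulmxV ?mulmx1 //.
Qed.
End Lin.

Section Main.
Variable R : realType.
Variable d : nat -> nat.
Variable D : forall n, 'M[R]_(d n.+1, d n).
Variable G : forall n, 'M[R]_(d n).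
Variables (Rb : forall n, 'M[R]_(d n.+1)) (Lb : forall n, 'M[R]_(d n)) (B : forall n, 'M[R]_(d n)).
Hypothesis Hc : is_complex D.
Hypothesis HG : forall n, inner_prod_mx (G n).
Hypothesis Hsvd : forall n, svd_bases (G n.+1) (G n) (D n) (Rb n) (Lb n).
Hypothesis HB : hodge_basis D G Rb Lb B.

Local Notation adjn n := (adj R d D G n).
Local Notation M := (hodge_matching D G Rb Lb B).

Lemma lap_core n (E : 'M[R]_(d n)) (x : 'rV[R]_(d n)) :
  x *m (adjn n *m D n + E) = 0 -> 0 <= (x *m G n *m (x *m E)^T) 0 0 ->
  x *m adjn n = 0 /\ (x *m G n *m (x *m E)^T) 0 0 = 0.
Proof.
move=> H HE.
have : (x *m G n *m (x *m (adjn n *m D n + E))^T) 0 0 = 0.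
  by rewrite H trmx0 mulmx0 mxE.
rewrite mulmxDr linearD /= mulmxDr mxE.
have [SG _] := HG n.
rewrite ip_sym // mulmxA (ip_adj _ _ _ (HG n.+1) (HG n)).
move/eqP; rewrite paddr_eq0 ?pd_ge0 // => /andP [/eqP H1 /eqP H2].
by split=> //; apply: (pd_eq0 (HG n.+1)).
Qed.

Lemma lap_adj n (x : 'rV[R]_(d n)) : x *m lap D G n = 0 -> x *m adjn n = 0.
Proof.
case: n x => [|m] x H.
  by case: (@lap_core 0 0 x H) => //; rewrite !mulmx0 trmx0 mulmx0 mxE.
have [SG _] := HG m.+1.
have := @lap_core m.+1 (D m *m adjn m) x H.
by rewrite mulmxA -ip_adj // => /(_ (pd_ge0 _ (HG m))) [].
Qed.

Lemma lapS m (x : 'rV[R]_(d m.+1)) : x *m lap D G m.+1 = 0 -> x *m D m = 0.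
Proof.
move=> H; have [SG _] := HG m.+1.
have := @lap_core m.+1 (D m *m adjn m) x H.
rewrite mulmxA -ip_adj // => /(_ (pd_ge0 _ (HG m))) [_].
exact: pd_eq0 (HG m).
Qed.


Lemma sqrt_nz k (i : 'I_(d k.+1)) (l : R) (w : 'rV[R]_(d k)) :
  Rplus R d D G Rb i -> row i (Rb k) *m D k = Num.sqrt l *: w -> Num.sqrt l != 0.
Proof.
move=> Hi Hf; apply/negP => /eqP E; move: Hi; rewrite /Rplus mulmxA Hf E scale0r.
by rewrite mul0mx eqxx.
Qed.

Lemma R_matched k (a : 'I_(d k.+1)) (i : 'I_(d k.+1)) :
  Rplus R d D G Rb i -> row a (B k.+1) = row i (Rb k) ->
  exists b s, [/\ s != 0, M k a b & row a (B k.+1) *m D k = s *: row b (B k)].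
Proof.
move=> Hi Ha.
have [_ _ _ H4 _] := Hsvd k.
have [l [j [Heig HL Hf]]] := H4 i Hi.
have [_ _ H3 _ _] := HB.
have [b Hb] := H3 k j HL.
have s0 := sqrt_nz Hi Hf.
exists b, (Num.sqrt l); split => //.
  apply/asboolP; exists i, j; split => //.
  by exists (Num.sqrt l).
by rewrite Ha Hf Hb.
Qed.

Lemma L_matched k (b : 'I_(d k)) (j : 'I_(d k)) :
  Lplus R d D G Lb j -> row b (B k) = row j (Lb k) -> exists a, M k a b.
Proof.
move=> Hj Hb.
have [_ _ _ _ H5] := Hsvd k.
have [l [i [Heig HR Hf]]] := H5 j Hj.
have [_ _ _ H4 _] := HB.
have [a Ha] := H4 k i HR.
have s0 := sqrt_nz HR Hf.
exists a; apply/asboolP; exists i, j; split => //.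
by exists (Num.sqrt l).
Qed.

Lemma key k (a : 'I_(d k.+1)) :
  row a (B k.+1) *m D k = 0 \/
  exists b s, [/\ s != 0, M k a b & row a (B k.+1) *m D k = s *: row b (B k)].
Proof.
have [_ H2 _ _ _] := HB.
case: (H2 k.+1 a) => [[j [HL Ha]]|[[i [Hi Ha]]|Hk]].
- left; have [_ _ H3 _ _] := Hsvd k.+1.
  have [l Heig] := H3 j.
  have l0 : l != 0.
    by apply/negP => /eqP E; move: HL; rewrite /Lplus Heig E scale0r eqxx.
  have : l *: (row a (B k.+1) *m D k) = 0.
    by rewrite scalemxAl Ha -Heig -!mulmxA (Hc k) !mulmx0.
  by move/eqP; rewrite scaler_eq0 (negbTE l0) /= => /eqP.
- by right; apply: R_matched Hi Ha.
- by left; apply: lapS.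
Qed.


Lemma Bunit n : B n \in unitmx.
Proof. by have [H1 _ _ _ _] := HB. Qed.

Lemma row_bcoef k (a : 'I_(d k.+1)) :
  row a (bcoef D B k) = row a (B k.+1) *m D k *m invmx (B k).
Proof. by rewrite /bcoef !row_mul. Qed.

Lemma rowBinv k (b : 'I_(d k)) : row b (B k) *m invmx (B k) = row b 1%:M.
Proof. by rewrite -row_mul mulmxV ?Bunit. Qed.

Lemma bcoef_s k (a : 'I_(d k.+1)) (b b' : 'I_(d k)) s :
  row a (B k.+1) *m D k = s *: row b (B k) ->
  bcoef D B k a b' = s * (b == b')%:R.
Proof.
move=> H; have := congr1 (fun A : 'M[R]_(1, d k) => A 0 b') (row_bcoef a).
by rewrite H -scalemxAl rowBinv !mxE.
Qed.

Lemma cn_M k (a : 'I_(d k.+1)) (b : 'I_(d k)) : bcoef D B k a b != 0 -> M k a b.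
Proof.
case: (key a) => [H|[b' [s [s0 HM H]]]].
  have E : bcoef D B k a b = (row a (bcoef D B k)) 0 b by rewrite [in RHS]mxE.
  by rewrite E row_bcoef H mul0mx mxE eqxx.
rewrite (bcoef_s _ H); case: (eqVneq b' b) => [E|ne]; first by rewrite -E.
by rewrite mulr0 eqxx.
Qed.

Lemma M_row k (a : 'I_(d k.+1)) (b : 'I_(d k)) : M k a b ->
  exists s, s != 0 /\ row a (B k.+1) *m D k = s *: row b (B k).
Proof.
move/asboolP => [i [j [Hi Hj Ha Hb [s [s0 Hs]]]]].
by exists s; split => //; rewrite Ha Hs Hb.
Qed.

Lemma M_rplus k (a : 'I_(d k.+1)) (b : 'I_(d k)) : M k a b ->
  exists i, Rplus R d D G Rb i /\ row a (B k.+1) = row i (Rb k).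
Proof. by move/asboolP => [i [j [Hi Hj Ha Hb _]]]; exists i. Qed.

Lemma M_lplus k (a : 'I_(d k.+1)) (b : 'I_(d k)) : M k a b ->
  exists j, Lplus R d D G Lb j /\ row b (B k) = row j (Lb k).
Proof. by move/asboolP => [i [j [Hi Hj Ha Hb _]]]; exists j. Qed.

Lemma row_par k (a a' : 'I_(d k)) c : row a' (B k) = c *: row a (B k) -> a = a'.
Proof.
move=> H; have := congr1 (fun A : 'M[R]_(1, d k) => (A *m invmx (B k)) 0 a') H.
rewrite /= -scalemxAl !rowBinv !mxE eqxx.
by case: eqVneq => [->//|]; rewrite mulr0 => _ /eqP; rewrite oner_eq0.
Qed.

Lemma R_eig k (i : 'I_(d k.+1)) : Rplus R d D G Rb i ->
  exists l, l != 0 /\ row i (Rb k) *m (D k *m adjn k) = l *: row i (Rb k).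
Proof.
move=> Hi; have [_ H2 _ _ _] := Hsvd k.
have [l Hl] := H2 i; exists l; split => //.
by apply/negP => /eqP E; move: Hi; rewrite /Rplus Hl E scale0r eqxx.
Qed.

Lemma M_inj k (a a' : 'I_(d k.+1)) (b : 'I_(d k)) : M k a b -> M k a' b -> a = a'.
Proof.
have gen : forall a0, M k a0 b -> exists al, al != 0 /\
    row a0 (B k.+1) = al *: (row b (B k) *m adjn k).
  move=> a0 HM; have [s [s0 Hs]] := M_row HM.
  have [i [Hi Ha]] := M_rplus HM.
  have [l [l0 Hl]] := R_eig Hi.
  exists (l^-1 * s); split; first by rewrite mulf_neq0 ?invr_eq0.
  rewrite -Ha mulmxA Hs in Hl.
  by rewrite -scalerA scalemxAl Hl scalerA mulVf ?scale1r.
move=> /gen [al [al0 Ha]] /gen [al' [_ Ha']].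
apply: (@row_par _ _ _ (al' / al)).
by rewrite Ha Ha' scalerA divfK.
Qed.

Lemma M_fun k (a : 'I_(d k.+1)) (b b' : 'I_(d k)) : M k a b -> M k a b' -> b = b'.
Proof.
move=> Hb Hb'; have [s [s0 Hs]] := M_row Hb.
have [s' [s0' Hs']] := M_row Hb'.
have := bcoef_s b' Hs; rewrite (bcoef_s b' Hs') eqxx mulr1.
by case: eqVneq => [//|_]; rewrite mulr0 => /eqP; rewrite (negbTE s0').
Qed.

Lemma M_nz k (a : 'I_(d k.+1)) (b : 'I_(d k)) : M k a b -> bcoef D B k a b != 0.
Proof.
move=> Hb; have [s [s0 Hs]] := M_row Hb.
by rewrite (bcoef_s b Hs) eqxx mulr1.
Qed.

Lemma M_chain n (a : 'I_(d n.+1)) (b : 'I_(d n)) (g : 'I_(d n.+2)) :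
  M n a b -> M n.+1 g a -> False.
Proof.
move=> Hab Hga.
have [i [Hi Ha]] := M_rplus Hab.
have [s [s0 Hs]] := M_row Hga.
have : s *: (row a (B n.+1) *m D n) = 0.
  by rewrite scalemxAl -Hs -mulmxA (Hc n) mulmx0.
move/eqP; rewrite scaler_eq0 (negbTE s0) /= => /eqP H0.
by move: Hi; rewrite /Rplus -Ha mulmxA H0 mul0mx eqxx.
Qed.


Local Notation c := (bcoef D B).

Lemma stepM_up u v : stepM R d c M u v -> v.1 = u.1.+1.
Proof.
rewrite /stepM => /orP [/andP [/andP [_ Hc0] HnM]|/andP [/eqP -> _] //].
exfalso; move: Hc0 HnM; rewrite /cn /mxn /Mn.
case: (insub u.2 : option 'I_(d v.1.+1)) => [a|]; last by rewrite eqxx.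
case: (insub v.2 : option 'I_(d v.1)) => [b|]; last by rewrite eqxx.
by move=> /cn_M ->.
Qed.

Lemma reach_up u v : reachM R d c M u v -> u = v \/ (u.1 < v.1)%N.
Proof.
elim=> [x y /stepM_up ->|x|x y z _ IH1 _ IH2]; [by right|by left|].
case: IH1 => [->//|H1]; case: IH2 => [<-|H2]; right => //.
exact: ltn_trans H1 H2.
Qed.

Lemma path_up u s : path (stepM R d c M) u s -> all (fun v => u.1 < v.1)%N s.
Proof.
elim: s u => [//|v s IH] u /= /andP [/stepM_up Hv /IH Hs].
rewrite Hv ltnSn /=; apply/allP => w /(allP Hs) /=.
by rewrite Hv; apply: ltn_trans.
Qed.

Lemma Mn_of k (a : 'I_(d k.+1)) (b : 'I_(d k)) : M k a b -> Mn d M k a b.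
Proof. by rewrite /Mn !valK. Qed.

Lemma Mn_inv k i j : Mn d M k i j ->
  exists (a : 'I_(d k.+1)) (b : 'I_(d k)), [/\ val a = i, val b = j & M k a b].
Proof.
rewrite /Mn; case: insubP => [a _ Ea|_]; last by [].
case: insubP => [b _ Eb|_]; last by [].
by move=> H; exists a, b.
Qed.

Lemma crit_of_ker n (a : 'I_(d n)) : row a (B n) *m lap D G n = 0 -> critical M n a.
Proof.
move=> Hk; split.
- exact: ltn_ord.
- move=> j; apply/negP => /Mn_inv [g [b [_ /val_inj Eb HM]]].
  subst b; have [j' [Hj Hb]] := M_lplus HM.
  by move: Hj; rewrite /Lplus -Hb mulmxA (lap_adj Hk) mul0mx eqxx.
- case: n a Hk => [//|m] a Hk j _.
  apply/negP => /Mn_inv [a' [b [/val_inj Ea _ HM]]].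
  subst a'; have [i [Hi Ha]] := M_rplus HM.
  by move: Hi; rewrite /Rplus -Ha mulmxA (lapS Hk) mul0mx eqxx.
Qed.

Lemma ker_of_crit n (a : 'I_(d n)) : critical M n a -> row a (B n) *m lap D G n = 0.
Proof.
case=> _ C2 C3.
have [_ H2 _ _ _] := HB.
case: (H2 n a) => [[j [HL Ha]]|[HR|//]].
  have [a' Ha'] := L_matched HL Ha.
  by have := C2 a'; rewrite Mn_of.
case: n a C2 C3 HR => [//|m] a C2 C3 [i [Hi Ha]].
have [b [s [_ HM _]]] := R_matched Hi Ha.
by have := C3 b isT; rewrite Mn_of.
Qed.


Lemma main_sec :
  [/\ morse_matching (bcoef D B) M,
      (forall n (x : 'rV[R]_(d n)),
         x *m lap D G n = 0 <->
         exists cf : 'I_(d n) -> R,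
           (forall a : 'I_(d n), ~ critical M n a -> cf a = 0) /\
           x = \sum_(a : 'I_(d n)) cf a *: row a (B n)) &
      (forall n (a : 'I_(d n.+1)) (b : 'I_(d n)),
         critical M n.+1 a -> critical M n b ->
         morse_coef (bcoef D B) M n a b = 0)].
Proof.
split.
- split.
  + by move=> n a b; apply: M_nz.
  + by move=> n a b b'; apply: M_fun.
  + by move=> n a a' b; apply: M_inj.
  + by move=> n a b g; apply: M_chain.
  + move=> n; split.
    * by move=> a; apply: rt_refl.
    * by move=> a b e; apply: rt_trans.
    * move=> a b /reach_up [[/val_inj //]|/=]; by rewrite ltnn.
- move=> n x; split.
  + move=> Hx; have [_ _ _ _ H5] := HB.
    have [cf Ecf] := H5 n x Hx.
    exists (fun a => if row a (B n) *m lap D G n == 0 then cf a else 0); split.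
      move=> a Hna; case: eqP => // /crit_of_ker; by [].
    rewrite Ecf big_mkcond /=; apply: eq_bigr => a _.
    by case: ifP => _; rewrite ?scale0r.
  + move=> [cf [Hcf ->]]; rewrite mulmx_suml big1 // => a _.
    have [Ca|Na] := boolp.pselect (critical M n a).
      by rewrite -scalemxAl ker_of_crit // scaler0.
    by rewrite Hcf // scale0r mul0mx.
- move=> n a b _ _; rewrite /morse_coef big1 // => m _.
  rewrite big_pred0 // => t; apply/negbTE; apply/negP => /andP [Hp _].
  have /allP /(_ (n, val b)) := path_up Hp.
  rewrite /pth mem_rcons in_cons eqxx /= => /(_ isT) H.
  by have := ltn_trans (ltnSn n) H; rewrite ltnn.
Qed.
End Main.


Unset Implicit Arguments. Set Strict Implicit.

Theorem mainTheorem3 (R : realType) (d : nat -> nat)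
    (D : forall n, 'M[R]_(d n.+1, d n)) (G : forall n, 'M[R]_(d n))
    (Rb : forall n, 'M[R]_(d n.+1)) (Lb : forall n, 'M[R]_(d n))
    (B : forall n, 'M[R]_(d n)) :
  is_complex D ->
  (forall n, inner_prod_mx (G n)) ->
  (forall n, svd_bases (G n.+1) (G n) (D n) (Rb n) (Lb n)) ->
  hodge_basis D G Rb Lb B ->
  let M := hodge_matching D G Rb Lb B in
  [/\ morse_matching (bcoef D B) M,
      (forall n (x : 'rV[R]_(d n)),
         x *m lap D G n = 0 <->
         exists cf : 'I_(d n) -> R,
           (forall a : 'I_(d n), ~ critical M n a -> cf a = 0) /\
           x = \sum_(a : 'I_(d n)) cf a *: row a (B n)) &
      (forall n (a : 'I_(d n.+1)) (b : 'I_(d n)),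
         critical M n.+1 a -> critical M n b ->
         morse_coef (bcoef D B) M n a b = 0)].
Proof.
move=> Hc HG Hsvd HB M.
exact: main_sec Hc HG Hsvd HB.
Qed.
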